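(* Let $(\mathcal{A},\tau)$ be a tracial $W^*$-probability space, $X$ a topological space, and $u_1,u_2:X\to\mathcal{A}$ functions continuous with respect to the operator norm on $\mathcal{A}$, such that for every $x\in X$: $u_1(x)$ and $u_2(x)$ are $*$-free, $\tau(u_1(x))=\tau(u_2(x))=0$, and $1_{\mathcal{A}}-u_1(x)u_2(x)$ is invertible in $\mathcal{A}$. Then the set \[Y=\{x\in X:\|u_1(x)\|_2\|u_2(x)\|_2<1\}\] is both open and closed in $X$. In particular, if $X$ is connected, then either $Y=X$ or $Y=\varnothing$.
   Context: A tracial $W^*$-probability space is a von Neumann algebra $\mathcal{A}$ with a faithful normal trace $\tau$ satisfying $\tau(1_{\mathcal{A}})=1$. $\|a\|_2=\tau(a^*a)^{1/2}$. Elements $a,b$ are $*$-free if the unital $*$-algebras they generate are freely independent with respect to $\tau$. *)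

(* Defs.v *)
From HB Require Import structures.
From mathcomp Require Import all_boot all_order all_algebra.
From mathcomp Require Import complex.
From mathcomp Require Import all_classical all_reals.
From mathcomp Require Import topology.
Set Implicit Arguments. Unset Strict Implicit. Unset Printing Implicit Defensive.
Import Order.TTheory GRing.Theory Num.Theory.
Local Open Scope ring_scope.
Local Open Scope complex_scope.

(* A tracial W*-probability space is presented abstractly (Sakai/Kadison):
   a complex unital *-algebra A (an algType over C = R[i]) with a norm [nrm],
   an involution [star] and a trace [tau], such that A is a C*-algebra
   (Banach *-algebra with the C*-identity) which is monotone complete, and
   tau is a faithful normal tracial state.  By Kadison's theorem, a C*-algebra
   is a W*-algebra iff it is monotone complete and has a separating family of
   normal states; a faithful normal state is such a family. *)

Section Defs.
Variables (R : realType) (A : algType R[i]).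
Variables (star : A -> A) (nrm : A -> R) (tau : A -> R[i]).

Definition opp_le (a b : A) : Prop := exists c, b - a = star c * c.

Definition selfadjoint (a : A) : Prop := star a = a.

Definition is_star_algebra : Prop :=
  [/\ forall a, star (star a) = a,
      forall a b, star (a + b) = star a + star b,
      forall (c : R[i]) a, star (c *: a) = (c^*)%C *: star a,
      forall a b, star (a * b) = star b * star a
    & star 1 = 1].

Definition is_Cstar_norm : Prop :=
  (forall a, 0 <= nrm a) /\
  (forall a, nrm a = 0 -> a = 0) /\
  (forall a b, nrm (a + b) <= nrm a + nrm b) /\
  (forall (c : R[i]) a, nrm (c *: a) = Normc.normc c * nrm a) /\
  (forall a b, nrm (a * b) <= nrm a * nrm b) /\
  (forall a, nrm (star a * a) = nrm a ^+ 2).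

Definition norm_complete : Prop :=
  forall u : nat -> A,
    (forall e : R, 0 < e -> exists N, forall m n, (N <= m)%N -> (N <= n)%N ->
        nrm (u m - u n) < e) ->
    exists l, forall e : R, 0 < e -> exists N, forall n, (N <= n)%N ->
        nrm (u n - l) < e.

Definition directed_set (I : Type) (le : I -> I -> Prop) : Prop :=
  [/\ inhabited I, forall i, le i i,
      forall i j k, le i j -> le j k -> le i k
    & forall i j, exists k, le i k /\ le j k].

Definition bounded_incr_net (I : Type) (le : I -> I -> Prop) (a : I -> A) : Prop :=
  [/\ directed_set le, forall i, selfadjoint (a i),
      forall i j, le i j -> opp_le (a i) (a j)
    & exists M : A, forall i, opp_le (a i) M].

Definition is_sup_net (I : Type) (a : I -> A) (s : A) : Prop :=
  selfadjoint s /\ (forall i, opp_le (a i) s) /\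
  (forall b, selfadjoint b -> (forall i, opp_le (a i) b) -> opp_le s b).

Definition monotone_complete_normal : Prop :=
  forall (I : Type) (le : I -> I -> Prop) (a : I -> A),
    bounded_incr_net le a ->
    exists s, is_sup_net a s /\
      (forall i, tau (a i) <= tau s) /\
      (forall c : R[i], (forall i, tau (a i) <= c) -> tau s <= c).

Definition faithful_tracial_state : Prop :=
  (forall a b, tau (a + b) = tau a + tau b) /\
  (forall (c : R[i]) a, tau (c *: a) = c * tau a) /\
  [/\ tau 1 = 1,
      forall a b, tau (a * b) = tau (b * a),
      forall a, 0 <= tau (star a * a)
    & forall a, tau (star a * a) = 0 -> a = 0].

Definition tracial_Wstar_probability_space : Prop :=
  [/\ is_star_algebra, is_Cstar_norm, norm_complete,
      faithful_tracial_state & monotone_complete_normal].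

Definition norm2 (a : A) : R := Num.sqrt (complex.Re (tau (star a * a))).

Definition invertible (a : A) : Prop := exists b, a * b = 1 /\ b * a = 1.

Inductive in_star_alg (a : A) : A -> Prop :=
  | sa_one : in_star_alg a 1
  | sa_gen : in_star_alg a a
  | sa_star : in_star_alg a (star a)
  | sa_add x y : in_star_alg a x -> in_star_alg a y -> in_star_alg a (x + y)
  | sa_scale (c : R[i]) x : in_star_alg a x -> in_star_alg a (c *: x)
  | sa_mul x y : in_star_alg a x -> in_star_alg a y -> in_star_alg a (x * y).

Definition star_free (a b : A) : Prop :=
  forall (n : nat) (side : 'I_n.+1 -> bool) (p : 'I_n.+1 -> A),
    (forall k : 'I_n.+1, forall Hk : (k.+1 < n.+1)%N,
        side k != side (Ordinal Hk)) ->
    (forall k, in_star_alg (if side k then a else b) (p k)) ->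
    (forall k, tau (p k) = 0) ->
    tau (\prod_(k < n.+1) p k) = 0.

Definition norm_continuous (X : topologicalType) (u : X -> A) : Prop :=
  forall x (e : R), 0 < e -> \forall y \near x, nrm (u y - u x) < e.

End Defs.

(* Main.v *)
Require Import Defs.
From HB Require Import structures.
From mathcomp Require Import all_boot all_order all_algebra.
From mathcomp Require Import complex.
From mathcomp Require Import all_classical all_reals.
From mathcomp Require Import topology.
From mathcomp Require Import ring lra.
Import Order.TTheory GRing.Theory Num.Theory.
Local Open Scope ring_scope.
Local Open Scope classical_set_scope.
Local Open Scope complex_scope.
Local Open Scope ring_scope.
Set Implicit Arguments. Unset Strict Implicit. Unset Printing Implicit Defensive.

Section Cx.
Variable R : realType.
Lemma ReD (x y : R[i]) : complex.Re (x + y) = complex.Re x + complex.Re y.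
Proof. by case: x; case: y. Qed.
Lemma ImD (x y : R[i]) : complex.Im (x + y) = complex.Im x + complex.Im y.
Proof. by case: x; case: y. Qed.
Lemma ReN (x : R[i]) : complex.Re (- x) = - complex.Re x.
Proof. by case: x. Qed.
Lemma ReB (x y : R[i]) : complex.Re (x - y) = complex.Re x - complex.Re y.
Proof. by rewrite ReD ReN. Qed.
Lemma ReMr (r : R) (x : R[i]) : complex.Re (r%:C * x) = r * complex.Re x.
Proof. by case: x => a b /=; rewrite mul0r subr0. Qed.
Lemma Re1 : complex.Re (1 : R[i]) = 1. Proof. by []. Qed.
Lemma Re0 : complex.Re (0 : R[i]) = 0. Proof. by []. Qed.
Lemma Re_nat n : complex.Re (n%:R : R[i]) = n%:R.
Proof. elim: n => // n IH. by rewrite -addn1 !natrD ReD IH. Qed.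
Lemma Re_conj (x : R[i]) : complex.Re (x^*)%C = complex.Re x.
Proof. by case: x. Qed.
Lemma ge0_Im (x : R[i]) : 0 <= x -> complex.Im x = 0.
Proof. by rewrite lecE => /andP[/eqP -> _]. Qed.
Lemma ge0_Re (x : R[i]) : 0 <= x -> 0 <= complex.Re x.
Proof. by rewrite lecE => /andP[_ ->]. Qed.
Lemma ge0_real (x : R[i]) : 0 <= x -> x = (complex.Re x)%:C.
Proof. by case: x => a b /ge0_Im /= ->. Qed.
Lemma normc_real (r : R) : 0 <= r -> Normc.normc r%:C = r.
Proof. by move=> r0; rewrite /Normc.normc /= expr0n /= addr0 sqrtr_sqr ger0_norm. Qed.
Lemma normcN1 : Normc.normc (-1 : R[i]) = 1.
Proof. by rewrite /Normc.normc /= oppr0 expr0n /= addr0 sqrtr_sqr normrN normr1. Qed.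
Lemma normc0' : Normc.normc (0 : R[i]) = 0.
Proof. by rewrite normc_real. Qed.
End Cx.

Section Basics.
Variables (R : realType) (A : algType R[i]) (star : A -> A) (nrm : A -> R) (tau : A -> R[i]).
Hypothesis HA : tracial_Wstar_probability_space star nrm tau.

Lemma starK a : star (star a) = a. Proof. case: HA => [[H _ _ _ _] _ _ _ _]; exact: H. Qed.
Lemma starD a b : star (a + b) = star a + star b. Proof. case: HA => [[_ H _ _ _] _ _ _ _]; exact: H. Qed.
Lemma starZ (c : R[i]) a : star (c *: a) = (c^*)%C *: star a. Proof. case: HA => [[_ _ H _ _] _ _ _ _]; exact: H. Qed.
Lemma starM a b : star (a * b) = star b * star a. Proof. case: HA => [[_ _ _ H _] _ _ _ _]; exact: H. Qed.
Lemma star1 : star 1 = 1. Proof. case: HA => [[_ _ _ _ H] _ _ _ _]; exact: H. Qed.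
Lemma nrm_ge0 a : 0 <= nrm a. Proof. case: HA => [_ [H _] _ _ _]; exact: H. Qed.
Lemma nrm_eq0 a : nrm a = 0 -> a = 0. Proof. case: HA => [_ [_ [H _]] _ _ _]; exact: H. Qed.
Lemma nrmD a b : nrm (a + b) <= nrm a + nrm b. Proof. case: HA => [_ [_ [_ [H _]]] _ _ _]; exact: H. Qed.
Lemma nrmZ (c : R[i]) a : nrm (c *: a) = Normc.normc c * nrm a.
Proof. case: HA => [_ [_ [_ [_ [H _]]]] _ _ _]; exact: H. Qed.
Lemma nrmM a b : nrm (a * b) <= nrm a * nrm b. Proof. case: HA => [_ [_ [_ [_ [_ [H _]]]]] _ _ _]; exact: H. Qed.
Lemma nrmC a : nrm (star a * a) = nrm a ^+ 2. Proof. case: HA => [_ [_ [_ [_ [_ [_ H]]]]] _ _ _]; exact: H. Qed.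
Lemma complete : norm_complete nrm. Proof. by case: HA. Qed.
Lemma tauD a b : tau (a + b) = tau a + tau b. Proof. case: HA => [_ _ _ [H _] _]; exact: H. Qed.
Lemma tauZ (c : R[i]) a : tau (c *: a) = c * tau a. Proof. case: HA => [_ _ _ [_ [H _]] _]; exact: H. Qed.
Lemma tau1 : tau 1 = 1. Proof. case: HA => [_ _ _ [_ [_ [H _ _ _]]] _]; exact: H. Qed.
Lemma tau_pos a : 0 <= tau (star a * a). Proof. case: HA => [_ _ _ [_ [_ [_ _ H _]]] _]; exact: H. Qed.

Lemma star0 : star 0 = 0.
Proof. have h : star 0 + star 0 = star 0 + 0 by rewrite -starD !addr0. exact: (addrI _ h). Qed.
Lemma starN a : star (- a) = - star a.
Proof. have h : star a + star (- a) = star a + - star a by rewrite -starD !subrr star0. exact: (addrI _ h). Qed.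
Lemma starB a b : star (a - b) = star a - star b.
Proof. by rewrite starD starN. Qed.
Lemma star_sum (I : Type) (r : seq I) (P : pred I) (F : I -> A) :
  star (\sum_(i <- r | P i) F i) = \sum_(i <- r | P i) star (F i).
Proof. exact: (big_morph _ starD star0). Qed.
Lemma star_exp a n : star (a ^+ n) = (star a) ^+ n.
Proof. elim: n => [|n IH]; first by rewrite !expr0 star1. by rewrite exprS starM IH exprSr. Qed.
Lemma starZr (r : R) a : star (r%:C *: a) = r%:C *: star a.
Proof. by rewrite starZ conjc_real. Qed.

Lemma tau0 : tau 0 = 0.
Proof. have h : tau 0 + tau 0 = tau 0 + 0 by rewrite -tauD !addr0. exact: (addrI _ h). Qed.
Lemma tauN a : tau (- a) = - tau a.
Proof. have h : tau a + tau (- a) = tau a + - tau a by rewrite -tauD !subrr tau0. exact: (addrI _ h). Qed.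
Lemma tauB a b : tau (a - b) = tau a - tau b.
Proof. by rewrite tauD tauN. Qed.
Lemma tau_sum (I : Type) (r : seq I) (P : pred I) (F : I -> A) :
  tau (\sum_(i <- r | P i) F i) = \sum_(i <- r | P i) tau (F i).
Proof. exact: (big_morph _ tauD tau0). Qed.
Lemma Re_tau_ge0 a : 0 <= complex.Re (tau (star a * a)).
Proof. exact/ge0_Re/tau_pos. Qed.
Lemma Im_tau_pos a : complex.Im (tau (star a * a)) = 0.
Proof. exact/ge0_Im/tau_pos. Qed.

Lemma tau_star x : tau (star x) = ((tau x)^*)%C.
Proof.
have h1 := Im_tau_pos (x + 1).
have h2 := Im_tau_pos (x + 'i%C *: 1).
rewrite starD star1 mulrDl !mulrDr !mulr1 !mul1r !tauD tau1 in h1.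
rewrite starD starZ star1 mulrDl !mulrDr -!scalerAl -!scalerAr !mul1r !mulr1 !tauD !tauZ tau1 in h2.
move: h1 h2; rewrite !ImD Im_tau_pos.
case: (tau x) => p1 p2; case: (tau (star x)) => q1 q2 /= h1 h2.
congr (_ +i* _); rewrite ?mul0r ?mul1r ?mulr0 ?add0r ?addr0 in h1 h2 *; lra.
Qed.

Lemma tau_star0 x : tau x = 0 -> tau (star x) = 0.
Proof. by rewrite tau_star => ->; rewrite conjc0. Qed.

Lemma nrm0 : nrm 0 = 0.
Proof. by rewrite -(scale0r (0 : A)) nrmZ normc0' mul0r. Qed.
Lemma nrmN a : nrm (- a) = nrm a.
Proof. by rewrite -scaleN1r nrmZ normcN1 mul1r. Qed.
Lemma nrmBC a b : nrm (a - b) = nrm (b - a).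
Proof. by rewrite -nrmN opprB. Qed.
Lemma nrmZr (r : R) a : 0 <= r -> nrm (r%:C *: a) = r * nrm a.
Proof. by move=> r0; rewrite nrmZ normc_real. Qed.

Lemma nrm_star_le a : nrm a <= nrm (star a).
Proof.
have [a0|] := eqVneq (nrm a) 0; first by rewrite a0 nrm_ge0.
move=> na0; have na : 0 < nrm a by rewrite lt0r na0 nrm_ge0.
have := nrmM (star a) a; rewrite nrmC expr2 => h.
by rewrite -(ler_pM2r na).
Qed.
Lemma nrm_star a : nrm (star a) = nrm a.
Proof. by apply/eqP; rewrite eq_le nrm_star_le -{2}(starK a) nrm_star_le. Qed.

Lemma one_neq0 : (1 : A) != 0.
Proof. apply/eqP => h; have := tau1; rewrite h tau0 => /eqP; by rewrite eq_sym oner_eq0. Qed.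

Lemma nrm1 : nrm 1 = 1.
Proof.
have := nrmC 1; rewrite star1 mulr1 expr2 => h.
have : nrm 1 != 0 by apply/eqP => /nrm_eq0 /eqP; rewrite (negbTE one_neq0).
move=> n0; apply: (mulfI n0); by rewrite mulr1 -h.
Qed.

Lemma nrm_small0 w : (forall e, 0 < e -> nrm w < e) -> w = 0.
Proof.
move=> H; apply: nrm_eq0; apply/eqP; rewrite eq_le nrm_ge0 andbT.
rewrite leNgt; apply/negP => h; by have := H _ h; rewrite ltxx.
Qed.


Lemma geom_small (e : R) : 0 < e -> exists N : nat, ((2:R)^-1) ^+ N < e.
Proof.
move=> e0.
have he : 0 <= e^-1 by rewrite invr_ge0 ltW.
set N := Num.Def.archi_bound e^-1.
have hN := archi_boundP he.
exists N.
have h2 : (N%:R : R) < 2 ^+ N.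
  have := ltn_expl N (isT : (1 < 2)%N).
  by rewrite -(ltr_nat R) natrX.
have Np : 0 < (N%:R : R) by apply: le_lt_trans hN.
rewrite exprVn.
have : e^-1 < 2 ^+ N by apply: lt_trans h2.
move=> h3.
rewrite -[X in _ < X]invrK ltf_pV2 ?posrE ?exprn_gt0 ?invr_gt0 //.
Qed.

Lemma nrm_add3 a b c : nrm (a + b + c) <= nrm a + nrm b + nrm c.
Proof. apply: (le_trans (nrmD _ _)); by rewrite lerD2r nrmD. Qed.

Lemma sqrt_lemma s : star s = s -> nrm s <= 2^-1 -> exists e, 1 - s = star e * e.
Proof.
move=> ss ns.
set h : R[i] := ((2:R)^-1)%:C.
have nh : forall w, nrm (h *: w) = 2^-1 * nrm w by move=> w; rewrite nrmZr // invr_ge0.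
pose F := fun w : A => h *: (s + w * w).
pose z := fun k => iter k F 0.
have zS : forall k, z k.+1 = h *: (s + z k * z k) by [].
have zst : forall k, star (z k) = z k.
  elim=> [|k IH]; first exact: star0.
  by rewrite zS starZr starD starM IH ss.
have zb : forall k, nrm (z k) <= 2^-1.
  elim=> [|k IH]; first by rewrite /= nrm0 invr_ge0.
  rewrite zS nh.
  have h1 := nrmD s (z k * z k).
  have h2 := nrmM (z k) (z k).
  have h3 := nrm_ge0 (z k).
  have h4 : nrm (z k) * nrm (z k) <= 2^-1 * 2^-1 by apply: ler_pM.
  have : nrm (s + z k * z k) <= 1.
    apply: (le_trans h1); apply: le_trans (lerD ns (le_trans h2 h4)) _.
    have -> : (2:R)^-1 = 1/2 by rewrite mul1r.
    lra.
  move=> h5; have -> : (2:R)^-1 = 1/2 by rewrite mul1r.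
  have := nrm_ge0 (s + z k * z k); move: h5; set t := nrm _; nra.
have zd : forall k, nrm (z k.+1 - z k) <= (2^-1) ^+ k.+1.
  elim=> [|k IH].
    have z0 : z 0%N = 0 by []. rewrite zS z0 subr0 mul0r addr0 nh expr1.
    move: ns (nrm_ge0 s); have -> : (2:R)^-1 = 1/2 by rewrite mul1r.
    set t := nrm s; lra.
  rewrite zS (zS k) -scalerBr nh.
  have -> : (s + z k.+1 * z k.+1 - (s + z k * z k))
     = z k.+1 * (z k.+1 - z k) + (z k.+1 - z k) * z k.
    by rewrite mulrBr mulrBl addrA subrK opprD addrA addrAC [s + _ - _ - s]addrAC [s + _]addrC addrK.
  rewrite exprS ler_pM2l ?invr_gt0 //.
  apply: (le_trans (nrmD _ _)).
  apply: le_trans (lerD (nrmM _ _) (nrmM _ _)) _.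
  have := zb k; have := zb k.+1; have := nrm_ge0 (z k.+1 - z k); have := nrm_ge0 (z k);
  have := nrm_ge0 (z k.+1); move: IH.
  have -> : (2:R)^-1 = 1/2 by rewrite mul1r.
  set t := (1/2 : R) ^+ k.+1; set d := nrm (z k.+1 - z k); set p := nrm (z k.+1); set q := nrm (z k).
  nra.
have zc : forall n k, nrm (z (n + k)%N - z n) <= (2^-1) ^+ n - (2^-1) ^+ (n + k).
  move=> n; elim=> [|k IH]; first by rewrite addn0 subrr nrm0 subrr.
  have -> : z (n + k.+1)%N - z n = (z (n + k).+1 - z (n + k)%N) + (z (n + k)%N - z n).
    by rewrite addrA subrK addnS.
  apply: (le_trans (nrmD _ _)).
  apply: le_trans (lerD (zd _) IH) _.
  rewrite addnS exprS.
  have -> : (2:R)^-1 = 1/2 by rewrite mul1r.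
  set t := (1/2 : R) ^+ (n + k); lra.
have zc' : forall N m n, (N <= m)%N -> (N <= n)%N -> nrm (z m - z n) <= (2^-1) ^+ N.
  have key : forall N m n, (N <= n)%N -> (n <= m)%N -> nrm (z m - z n) <= (2^-1) ^+ N.
    move=> N m n hn hm.
    rewrite -(subnKC hm).
    apply: (le_trans (zc _ _)).
    have h0 : 0 <= (2:R)^-1 ^+ (n + (m - n)) by rewrite exprn_ge0 // invr_ge0.
    apply: le_trans (_ : (2:R)^-1 ^+ n <= _).
      by rewrite lerBlDr lerDl.
    rewrite -(subnKC hn) exprD ler_piMr ?exprn_ge0 ?invr_ge0 //.
    by rewrite exprn_ile1 ?invr_ge0 // invf_le1 // ler1n.
  move=> N m n hm hn.
  case: (leqP n m) => hnm; first exact: key.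
  rewrite nrmBC; apply: key => //; exact: ltnW.
have [l hl] : exists l, forall e : R, 0 < e -> exists N, forall n, (N <= n)%N -> nrm (z n - l) < e.
  apply: complete => e e0.
  have [N hN] := geom_small e0.
  exists N => m n hm hn; exact: le_lt_trans (zc' _ _ _ hm hn) hN.
have lb : nrm l <= 2.
  have [N hN] := hl 1 ltr01.
  have := hN N (leqnn N).
  rewrite nrmBC => h1.
  have : l = (l - z N) + z N by rewrite subrK.
  move=> ->; apply: (le_trans (nrmD _ _)).
  have := zb N; move: h1; have -> : (2:R)^-1 = 1/2 by rewrite mul1r.
  set p := nrm _; set q := nrm _; lra.
have lfix : l = h *: (s + l * l).
  apply/eqP; rewrite -subr_eq0; apply/eqP; apply: nrm_small0 => e e0.
  have e8 : 0 < e / 8 by rewrite divr_gt0.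
  have [N hN] := hl _ e8.
  have h1 := hN N (leqnn N).
  have h2 := hN N.+1 (leqnSn N).
  have -> : l - h *: (s + l * l) = (l - z N.+1) + h *: (z N * (z N - l) + (z N - l) * l).
    have E : z N * (z N - l) + (z N - l) * l = z N * z N - l * l by rewrite mulrBr mulrBl addrA subrK.
    by rewrite E zS !scalerDr scalerN !opprD !addrA subrK.
  apply: (le_lt_trans (nrmD _ _)).
  rewrite nh nrmBC.
  have h3 : nrm (z N * (z N - l) + (z N - l) * l) <= nrm (z N) * nrm (z N - l) + nrm (z N - l) * nrm l.
    apply: (le_trans (nrmD _ _)); exact: lerD (nrmM _ _) (nrmM _ _).
  have := zb N; have := nrm_ge0 (z N - l); have := nrm_ge0 (z N.+1 - l); have := nrm_ge0 l;
  have := nrm_ge0 (z N); move: h1 h2 h3 lb.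
  have -> : (2:R)^-1 = 1/2 by rewrite mul1r.
  set p := nrm (z N - l); set q := nrm (z N.+1 - l); set r := nrm (z N); set t := nrm l;
  set w := nrm (_ + _).
  nra.
have lst : star l = l.
  apply/eqP; rewrite -subr_eq0; apply/eqP; apply: nrm_small0 => e e0.
  have e2 : 0 < e / 2 by rewrite divr_gt0.
  have [N hN] := hl _ e2.
  have h1 := hN N (leqnn N).
  have -> : star l - l = star (l - z N) + (z N - l) by rewrite starB zst addrA subrK.
  apply: (le_lt_trans (nrmD _ _)); rewrite nrm_star nrmBC.
  move: h1; set p := nrm _; move=> h1.
  have -> : e = e / 2 + e / 2 by rewrite -splitr.
  by rewrite ltrD.
exists (1 - l).
have hs : s = l + l - l * l.
  have h2 : ((1 + 1 : R[i]) * h) = 1.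
    rewrite /h; apply/eqP; rewrite eq_complex /= ?(addr0, mulr0, mul0r, subr0, eqxx, andbT).
    by apply/eqP; rewrite (_ : (1 + 1 : R) = 2%:R) // divff // pnatr_eq0.
  have : (1 + 1 : R[i]) *: l = s + l * l by rewrite {1}lfix scalerA h2 scale1r.
  rewrite scalerDl scale1r => ->; by rewrite addrK.
rewrite starB star1 lst hs mulrBr !mulrBl !mul1r mulr1.
rewrite !opprB !opprD !addrA.
by rewrite [1 - l + _]addrAC.
Qed.

Lemma pos_bound c y :
  complex.Re (tau (star y * (star c * c) * y)) <= 2 * nrm c ^+ 2 * complex.Re (tau (star y * y)).
Proof.
have [c0|] := eqVneq (nrm c) 0.
  by rewrite (nrm_eq0 c0) nrm0 star0 !mul0r !mulr0 !mul0r tau0 Re0 expr0n /= mulr0 mul0r.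
move=> nc0; have nc : 0 < nrm c by rewrite lt0r nc0 nrm_ge0.
set H := star c * c.
have nH : nrm H = nrm c ^+ 2 by rewrite /H nrmC.
have nHp : 0 < nrm H by rewrite nH exprn_gt0.
set r := (2 * nrm H)^-1.
have r0 : 0 < r by rewrite invr_gt0 mulr_gt0.
set s := r%:C *: H.
have ss : star s = s by rewrite /s starZr /H starM starK.
have ns : nrm s <= 2^-1.
  rewrite /s nrmZr; last exact: ltW. rewrite /r invfM -mulrA mulVf ?mulr1 //; exact: lt0r_neq0.
have [e he] := sqrt_lemma ss ns.
have := Re_tau_ge0 (e * y).
rewrite starM -mulrA [star e * (e * y)]mulrA -he mulrBl mul1r mulrBr.
rewrite /s -scalerAl -scalerAr tauB tauZ ReB ReMr subr_ge0 mulrA => h.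
have := Re_tau_ge0 y => hy.
rewrite -nH -mulrA.
rewrite mulrA.
have k : 0 < 2 * nrm H by rewrite mulr_gt0.
have : (2 * nrm H) * (r * complex.Re (tau (star y * H * y))) <= (2 * nrm H) * complex.Re (tau (star y * y)).
  by rewrite ler_pM2l.
by rewrite mulrA /r mulfV ?mul1r // lt0r_neq0.
Qed.

Lemma Re_tau_le z : complex.Re (tau z) <= 2 * nrm z.
Proof.
have key : forall w, nrm w <= 1 -> complex.Re (tau w) <= 2.
  move=> w hw.
  have h1 := pos_bound (w + 1) 1.
  rewrite star1 !mul1r !mulr1 tau1 Re1 mulr1 in h1.
  have h2 := Re_tau_ge0 (w - 1).
  rewrite starD star1 ?(mulrDl, mulrDr, mul1r, mulr1) !tauD tau1 !ReD Re1 tau_star Re_conj in h1.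
  rewrite starB star1 ?(mulrDl, mulrDr, mulrBl, mulrBr, mul1r, mulr1, mulrN1, mulN1r, opprK) in h2.
  rewrite !tauD !tauN tau1 !ReD !ReN Re1 tau_star Re_conj in h2.
  have h3 : nrm (w + 1) <= 2 by apply: (le_trans (nrmD _ _)); rewrite nrm1; lra.
  have h4 := nrm_ge0 (w + 1).
  move: h1 h2 h3 h4; set p := nrm (w + 1); set q := complex.Re (tau w); set t := complex.Re _.
  nra.
have [z0|] := eqVneq (nrm z) 0; first by rewrite (nrm_eq0 z0) tau0 nrm0 mulr0.
move=> nz0; have nz : 0 < nrm z by rewrite lt0r nz0 nrm_ge0.
have := key ((nrm z)^-1%:C *: z).
rewrite nrmZr; last by rewrite invr_ge0 ltW.
rewrite mulVf // lexx tauZ ReMr => /(_ isT) h.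
have hi : 0 < (nrm z)^-1 by rewrite invr_gt0.
by rewrite -(ler_pM2l hi) mulrCA mulVf ?mulr1.
Qed.

Fixpoint altw (a b : A) (s : bool) (l : seq A) : Prop :=
  match l with
  | [::] => True
  | x :: l' => [/\ in_star_alg star (if s then a else b) x, tau x = 0 & altw a b (~~ s) l']
  end.

Lemma altw_cat a b s l1 l2 : altw a b s l1 ->
  altw a b (if odd (size l1) then ~~ s else s) l2 -> altw a b s (l1 ++ l2).
Proof.
elim: l1 s => [|x l1 IH] s //= [h1 h2 h3] h4; split => //; apply: IH => //.
by case: (odd (size l1)) h4 => //=; rewrite negbK.
Qed.

Definition rep (m : nat) (x y : A) : seq A := flatten (nseq m [:: x; y]).

Lemma rep_odd m x y : odd (size (rep m x y)) = false.
Proof. by elim: m => //= m IH; rewrite negbK. Qed.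

Lemma altw_rep a b s m x y :
  in_star_alg star (if s then a else b) x -> tau x = 0 ->
  in_star_alg star (if ~~ s then a else b) y -> tau y = 0 -> altw a b s (rep m x y).
Proof. move=> h1 h2 h3 h4; elim: m => //= m IH; split => //; split => //; by rewrite negbK. Qed.

Lemma prod_rep m x y : \prod_(z <- rep m x y) z = (x * y) ^+ m.
Proof.
elim: m => [|m IH]; first by rewrite big_nil expr0.
by rewrite /= !big_cons IH exprS mulrA.
Qed.

Lemma altw_nth a b s l k : altw a b s l -> (k < size l)%N ->
  in_star_alg star (if s (+) odd k then a else b) (nth 0 l k) /\ tau (nth 0 l k) = 0.
Proof.
elim: l s k => [|x l IH] s k //= [h1 h2 h3].
case: k => [|k] /=; first by rewrite addbF.
move=> hk; have := IH _ _ h3 hk; by rewrite addNb addbN.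
Qed.

Lemma alt_tau a b s l : star_free star tau a b -> altw a b s l -> l != [::] ->
  tau (\prod_(z <- l) z) = 0.
Proof.
case: l => [//|x l] Hf Hw _.
rewrite (big_nth 0) big_mkord.
apply: (Hf (size l) (fun k => s (+) odd k) (fun k => nth 0 (x :: l) k)).
- move=> k Hk /=; by case: (s); case: (odd k).
- move=> k; exact: (altw_nth Hw (ltn_ord k)).1.
- move=> k; exact: (altw_nth Hw (ltn_ord k)).2.
Qed.

Lemma moments a b : star_free star tau a b -> tau a = 0 -> tau b = 0 ->
  forall m n, tau ((star b * star a) ^+ m * (a * b) ^+ n) =
    if m == n then (tau (star a * a) * tau (star b * b)) ^+ n else 0.
Proof.
move=> Hf ta tb.
set al := tau (star a * a); set be := tau (star b * b).
set a0 := star a * a + (- al) *: 1; set b0 := star b * b + (- be) *: 1.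
have Ha0 : star a * a = al *: 1 + a0 by rewrite /a0 addrCA scaleNr subrr addr0.
have Hb0 : star b * b = be *: 1 + b0 by rewrite /b0 addrCA scaleNr subrr addr0.
have ia : in_star_alg star a a := sa_gen _ _.
have ib : in_star_alg star b b := sa_gen _ _.
have isa : in_star_alg star a (star a) := sa_star _ _.
have isb : in_star_alg star b (star b) := sa_star _ _.
have ia0 : in_star_alg star a a0 := sa_add (sa_mul isa ia) (sa_scale _ (sa_one _ _)).
have ib0 : in_star_alg star b b0 := sa_add (sa_mul isb ib) (sa_scale _ (sa_one _ _)).
have tsa : tau (star a) = 0 by exact: tau_star0.
have tsb : tau (star b) = 0 by exact: tau_star0.
have ta0 : tau a0 = 0 by rewrite /a0 tauD tauZ tau1 mulr1 addrN.
have tb0 : tau b0 = 0 by rewrite /b0 tauD tauZ tau1 mulr1 addrN.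
elim=> [|m IH] [|n].
- by rewrite !expr0 mul1r tau1.
- rewrite expr0 mul1r -prod_rep; apply: (alt_tau (s := true) Hf) => //.
  exact: altw_rep.
- rewrite expr0 mulr1 -prod_rep; apply: (alt_tau (s := false) Hf) => //.
  exact: altw_rep.
have w1 : tau ((star b * star a) ^+ m * (b0 * (a * b) ^+ n)) = 0.
  have <- : \prod_(z <- rep m (star b) (star a) ++ b0 :: rep n a b) z
            = (star b * star a) ^+ m * (b0 * (a * b) ^+ n).
    by rewrite big_cat big_cons /= !prod_rep.
  apply: (alt_tau (s := false) Hf); last by case: (rep m _ _).
  apply: altw_cat; first exact: altw_rep.
  rewrite rep_odd /=; split => //; exact: altw_rep.
have w2 : tau ((star b * star a) ^+ m * (star b * (a0 * (b * (a * b) ^+ n)))) = 0.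
  have <- : \prod_(z <- rep m (star b) (star a) ++ [:: star b, a0, b & rep n a b]) z
            = (star b * star a) ^+ m * (star b * (a0 * (b * (a * b) ^+ n)))
    by rewrite big_cat !big_cons /= !prod_rep.
  apply: (alt_tau (s := false) Hf); last by case: (rep m _ _).
  apply: altw_cat; first exact: altw_rep.
  rewrite rep_odd /=; split => //; split => //; split => //; exact: altw_rep.
rewrite exprSr exprS -!mulrA [star a * (a * _)]mulrA Ha0 mulrDl -scalerAl mul1r.
rewrite mulrDr -scalerAr [star b * (b * _)]mulrA Hb0 mulrDl -scalerAl mul1r.
rewrite !mulrDr -!scalerAr !mulrDr -!scalerAr !tauD !tauZ !tauD !tauZ IH w1 w2 ?mulr0 ?addr0 eqSS.
case: (m == n); last by rewrite !mulr0.
by rewrite exprS mulrA.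
Qed.

Lemma tele (x : A) N : (1 - x) * \sum_(n < N) x ^+ n = 1 - x ^+ N.
Proof.
elim: N => [|N IH]; first by rewrite big_ord0 mulr0 expr0 subrr.
rewrite big_ord_recr /= mulrDr IH mulrBl mul1r -exprS.
by rewrite addrA subrK.
Qed.

Lemma key_contra a b : star_free star tau a b -> tau a = 0 -> tau b = 0 ->
  invertible (1 - a * b) ->
  complex.Re (tau (star a * a)) * complex.Re (tau (star b * b)) != 1.
Proof.
move=> Hf ta tb [c [_ hc]]; apply/eqP => h1.
have ab1 : tau (star a * a) * tau (star b * b) = 1.
  move: (Im_tau_pos a) (Im_tau_pos b) h1.
  case: (tau (star a * a)) => x1 x2; case: (tau (star b * b)) => y1 y2 /= -> -> h.
  apply/eqP; rewrite eq_complex /= ?(mulr0, mul0r, subr0, addr0, h, eqxx) //.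
have M := moments Hf ta tb; rewrite ab1 in M.
set P := a * b; set Q := star b * star a.
have sP : star P = Q by rewrite /P starM.
set g := nrm c.
set N := (Num.Def.archi_bound (4 * g ^+ 2)).+1.
have hN : 4 * g ^+ 2 < N%:R.
  apply: (lt_le_trans (archi_boundP _)); first by rewrite mulr_ge0 // exprn_ge0 // nrm_ge0.
  by rewrite ler_nat.
set S := \sum_(n < N) P ^+ n.
set y := 1 - P ^+ N.
have hS : S = c * y by rewrite /y -tele mulrA hc mul1r.
have L : complex.Re (tau (star S * S)) = N%:R.
  rewrite /S star_sum mulr_suml tau_sum.
  under eq_bigr => m _ do rewrite mulr_sumr tau_sum star_exp sP.
  under eq_bigr => m _ do under eq_bigr => n _ do rewrite M expr1n.
  have -> : \sum_(i < N) \sum_(i0 < N) (if (i : nat) == i0 then (1 : R[i]) else 0) = \sum_(i < N) 1.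
    apply: eq_bigr => m _.
    rewrite (bigD1 m) //= eqxx big1 ?addr0 // => n hn.
    case: eqP => // /ord_inj h; by rewrite h eqxx in hn.
  by rewrite sumr_const card_ord Re_nat.
have t1 : tau (P ^+ N) = 0 by have := M 0%N N; rewrite expr0 mul1r.
have t2 : tau (Q ^+ N) = 0 by have := M N 0%N; rewrite expr0 mulr1.
have t3 : tau (Q ^+ N * P ^+ N) = 1 by rewrite M eqxx expr1n.
have Ry : complex.Re (tau (star y * y)) = 2.
  rewrite /y starB star1 star_exp sP mulrBl mul1r !mulrBr !mulr1 !tauB tau1 t1 t2 t3.
  by rewrite subr0 sub0r opprK ReD Re1.
have := pos_bound c y.
have E : star y * (star c * c) * y = star S * S by rewrite hS starM !mulrA.
rewrite E L Ry -/g.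
move: hN; set t := g ^+ 2; lra.
Qed.

Lemma f_cont (X : topologicalType) (u : X -> A) : norm_continuous nrm u ->
  forall x e, 0 < e -> \forall y \near x,
    `|complex.Re (tau (star (u y) * u y)) - complex.Re (tau (star (u x) * u x))| < e.
Proof.
move=> Hu x e e0.
set M := nrm (u x).
have M0 : 0 <= M := nrm_ge0 _.
have K0 : 0 < 4 * (2 * M + 1) by rewrite mulr_gt0 // ltr_wpDl ?mulr_ge0.
set d := Num.min 1 (e / (4 * (2 * M + 1))).
have d0 : 0 < d by rewrite lt_min ltr01 divr_gt0.
apply: filterS (Hu x d d0) => y hy.
set D := u y - u x.
set z := star (u y) * u y - star (u x) * u x.
have hz : z = star D * u y + star (u x) * D.
  rewrite /z /D starB mulrBl !mulrBr addrA subrK //.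
have nz : nrm z <= nrm D * (2 * M + nrm D).
  rewrite hz; apply: (le_trans (nrmD _ _)).
  apply: le_trans (lerD (nrmM _ _) (nrmM _ _)) _.
  rewrite !nrm_star -/M.
  have : nrm (u y) <= M + nrm D.
    have -> : u y = D + u x by rewrite subrK.
    by rewrite addrC nrmD.
  have := nrm_ge0 D; have := nrm_ge0 (u y); set t := nrm D; set p := nrm (u y); nra.
have h1 := Re_tau_le z.
have h2 := Re_tau_le (- z).
rewrite tauN ReN nrmN in h2.
have hzE : complex.Re (tau (star (u y) * u y)) - complex.Re (tau (star (u x) * u x)) = complex.Re (tau z).
  by rewrite /z tauB ReB.
rewrite hzE.
move: hy; rewrite lt_min => /andP[hy1 hy2].
rewrite ltr_pdivlMr // in hy2.
have := nrm_ge0 D; move: hy1 hy2 nz h1 h2 => hy1 hy2 nz h1 h2.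
rewrite ltr_norml; move: hy1 hy2 nz h1 h2; rewrite -/D.
set t := nrm D; set q := complex.Re (tau z); set w := nrm z.
move=> *; apply/andP; split; nra.
Qed.

Lemma mul_cont (X : topologicalType) (f g : X -> R) x :
  (forall e, 0 < e -> \forall y \near x, `|f y - f x| < e) ->
  (forall e, 0 < e -> \forall y \near x, `|g y - g x| < e) ->
  forall e, 0 < e -> \forall y \near x, `|f y * g y - f x * g x| < e.
Proof.
move=> Hf Hg e e0.
set K := `|f x| + `|g x| + 1.
have K0 : 0 < K by rewrite ltr_wpDl // addr_ge0.
set d := Num.min 1 (e / (2 * K)).
have d0 : 0 < d by rewrite lt_min ltr01 divr_gt0 // mulr_gt0.
apply: filterS (filterI (Hf _ d0) (Hg _ d0)) => y [h1 h2].
have E : f y * g y - f x * g x = (f y - f x) * g y + f x * (g y - g x).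
  by rewrite mulrBl mulrBr addrA subrK.
rewrite E; apply: (le_lt_trans (ler_normD _ _)); rewrite !normrM.
have hg := ler_normD (g y - g x) (g x).
rewrite subrK in hg.
move: h1 h2; rewrite !lt_min => /andP[h1 h1'] /andP[h2 h2'].
rewrite ltr_pdivlMr ?mulr_gt0 // in h1'. rewrite ltr_pdivlMr ?mulr_gt0 // in h2'.
have := normr_ge0 (f y - f x); have := normr_ge0 (g y - g x); have := normr_ge0 (f x);
have := normr_ge0 (g x); have := normr_ge0 (g y).
move: hg h1 h1' h2 h2'; rewrite /K.
set a := `|f y - f x|; set b := `|g y - g x|; set p := `|f x|; set q := `|g x|; set r := `|g y|.
move=> hg h1 h1' h2 h2' r0 q0 p0 b0 a0.
have k1 : a * r <= a * (b + q) by rewrite ler_wpM2l // addrC.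
have k2 : a * b <= a * 1 by rewrite ler_wpM2l // ltW.
have k3 : p * b <= (p + q + 1) * b by rewrite ler_wpM2r // -addrA lerDl addr_ge0.
nra.
Qed.
End Basics.

Theorem corollary3p2 (R : realType) (A : algType R[i])
    (star : A -> A) (nrm : A -> R) (tau : A -> R[i])
    (HA : tracial_Wstar_probability_space star nrm tau)
    (X : topologicalType) (u1 u2 : X -> A)
    (Hu1 : norm_continuous nrm u1) (Hu2 : norm_continuous nrm u2)
    (Hfree : forall x, star_free star tau (u1 x) (u2 x))
    (Htau1 : forall x, tau (u1 x) = 0) (Htau2 : forall x, tau (u2 x) = 0)
    (Hinv : forall x, invertible (1 - u1 x * u2 x)) :
  let Y := [set x : X | norm2 star tau (u1 x) * norm2 star tau (u2 x) < 1] in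
  (open Y /\ closed Y) /\ (connected [set: X] -> Y = [set: X] \/ Y = set0).
Proof.
move=> Y.
pose f1 x := complex.Re (tau (star (u1 x) * u1 x)).
pose f2 x := complex.Re (tau (star (u2 x) * u2 x)).
pose g x := f1 x * f2 x.
have hY : forall x, Y x <-> g x < 1.
  move=> x; rewrite /Y /= /norm2 /g.
  rewrite -sqrtrM; last exact: Re_tau_ge0 HA _.
  by rewrite -{1}sqrtr1 ltr_sqrt.
have gc : forall x e, 0 < e -> \forall y \near x, `|g y - g x| < e.
  move=> x; apply: mul_cont; [have := f_cont HA Hu1 x | have := f_cont HA Hu2 x]; by rewrite /f1 /f2.
have gne : forall x, g x != 1.
  move=> x; have := key_contra HA (Hfree x) (Htau1 x) (Htau2 x) (Hinv x); by rewrite /g /f1 /f2.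
have oY : open Y.
  rewrite openE => x /hY gx.
  have e0 : 0 < 1 - g x by rewrite subr_gt0.
  apply: filterS (gc x _ e0) => y hy; apply/hY.
  have := ler_norm (g y - g x); move: hy; set t := `|_|; lra.
have cY : closed Y.
  rewrite -(setCK Y) closedC openE => x nYx.
  have gx : 1 < g x.
    rewrite lt_neqAle eq_sym gne /= leNgt; apply/negP => h; apply: nYx; exact/hY.
  have e0 : 0 < g x - 1 by rewrite subr_gt0.
  apply: filterS (gc x _ e0) => y hy /hY.
  have := ler_norm (g x - g y); rewrite distrC; move: hy; set t := `|_|; lra.
split => // hc.
case: (pselect (Y !=set0)) => [ne|e0].
  left; apply: hc => //; exists Y => //; by rewrite setTI.
right; apply/seteqP; split => x // Yx; apply: e0; by exists x.
Qed.
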